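(* Let $\psi_n$ be the division polynomials of the Legendre curve defined below. For every $\varepsilon>0$ there exists a constant $c(\varepsilon)$ such that for all $n\ge 1$, $h(\psi_n)\le c(\varepsilon)\, n^{2+\varepsilon}$; that is, $h(\psi_n)\le n^{2+o(1)}$.
   Context: Let $\lambda, X, Y$ be independent variables (associated with the Legendre curve $E_\lambda: Y^2=X(X-1)(X-\lambda)$). Define $\psi_n \in \mathbb{Z}[\lambda,X,Y]$ by $\psi_0=0$, $\psi_1=1$, $\psi_2=2Y$, $\psi_3 = 3X^4-4(1+\lambda)X^3+6\lambda X^2-\lambda^2$, $\psi_4 = 2Y\big(2X^6-4(1+\lambda)X^5+10\lambda X^4-10\lambda^2X^2+4\lambda^2(1+\lambda)X-2\lambda^3\big)$, and recursively $$\psi_{2k+1}=\psi_{k+2}\psi_k^3-\psi_{k-1}\psi_{k+1}^3,\qquad \psi_{2k}=\frac{1}{2Y}\psi_k\big(\psi_{k+2}\psi_{k-1}^2-\psi_{k-2}\psi_{k+1}^2\big).$$ For a polynomial $G$ with integer coefficients, its height $h(G)$ is the logarithm of the maximum of the absolute values of its coefficients. *)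

(* Defs.v *)
From HB Require Import structures.
From Stdlib Require Import Reals.
From mathcomp Require Import all_boot all_algebra.
From mathcomp Require Import mpoly.
Set Implicit Arguments. Unset Strict Implicit. Unset Printing Implicit Defensive.
Import GRing.Theory.
Local Open Scope ring_scope.

(* Z[lambda, X, Y] : variables 0 = lambda, 1 = X, 2 = Y *)
Notation ZLXY := {mpoly int[3]}.
Definition iL : 'I_3 := @Ordinal 3 0 isT.
Definition iX : 'I_3 := @Ordinal 3 1 isT.
Definition iY : 'I_3 := @Ordinal 3 2 isT.
Definition vL : ZLXY := 'X_iL.
Definition vX : ZLXY := 'X_iX.
Definition vY : ZLXY := 'X_iY.

(* Division by 2Y: maps sum_m c_m X^m to sum_{m_Y >= 1} (c_m div 2) X^(m - e_Y).
   When p is divisible by 2Y in Z[lambda,X,Y] (as it is in the recursion below),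
   this is exactly the quotient p / (2Y). *)
Definition div2Y (p : ZLXY) : ZLXY :=
  \sum_(m <- msupp p | leq 1 (m iY))
     ((p@_m %/ 2)%Z) *: 'X_[mnm_sub m U_(iY)].

Definition psi3 : ZLXY :=
  3%:R * vX ^+ 4 - 4%:R * (1 + vL) * vX ^+ 3 + 6%:R * vL * vX ^+ 2 - vL ^+ 2.

Definition psi4 : ZLXY :=
  2%:R * vY * (2%:R * vX ^+ 6 - 4%:R * (1 + vL) * vX ^+ 5 + 10%:R * vL * vX ^+ 4
     - 10%:R * vL ^+ 2 * vX ^+ 2 + 4%:R * vL ^+ 2 * (1 + vL) * vX
     - 2%:R * vL ^+ 3).

Definition psi_next (s : seq ZLXY) : ZLXY :=
  let m := size s in
  let P i := nth 0 s i in
  match m with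
  | 0 => 0
  | 1 => 1
  | 2 => 2%:R * vY
  | 3 => psi3
  | 4 => psi4
  | _ => if odd m then
           let k := m./2 in
           P k.+2 * P k ^+ 3 - P k.-1 * P k.+1 ^+ 3
         else
           let k := m./2 in
           div2Y (P k * (P k.+2 * P k.-1 ^+ 2 - P k.-2 * P k.+1 ^+ 2))
  end.

Fixpoint psi_list (n : nat) : seq ZLXY :=
  match n with
  | 0 => [::]
  | n'.+1 => let s := psi_list n' in rcons s (psi_next s)
  end.

Definition psi (n : nat) : ZLXY := nth 0 (psi_list n.+1) n.

Definition maxcoef (G : ZLXY) : nat := \max_(m <- msupp G) `|G@_m|%N.

Definition height (G : ZLXY) : Rdefinitions.R := Rpower.ln (INR (maxcoef G)).

(* Main.v *)
Require Import Defs.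
From Stdlib Require Import Reals Lra.
Module Aux.
From HB Require Import structures.
From mathcomp Require Import all_boot all_algebra mpoly zify.
Set Implicit Arguments. Unset Strict Implicit. Unset Printing Implicit Defensive.
Import GRing.Theory.
Local Open Scope ring_scope.

Definition N1 (p : ZLXY) : nat := (\sum_(m <- msupp p) `|p@_m|)%N.

Lemma N1_sup (p : ZLXY) (s : seq 'X_{1..3}) : uniq s -> {subset msupp p <= s} ->
  N1 p = (\sum_(m <- s) `|p@_m|)%N.
Proof.
move=> us sub; rewrite (bigID (fun m => m \in msupp p)) /=.
rewrite [X in (_ + X)%N]big1 ?addn0; last first.
  by move=> m /memN_msupp_eq0 ->.
rewrite -big_filter /N1; apply: perm_big.
apply: uniq_perm; first exact: msupp_uniq.
  exact: filter_uniq.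
move=> m; rewrite mem_filter; apply/idP/idP; first by move=> h; rewrite h sub.
by case/andP.
Qed.

Lemma N1_add p q : (N1 (p + q) <= N1 p + N1 q)%N.
Proof.
set s := undup (msupp p ++ msupp q).
have us : uniq s by apply: undup_uniq.
have sp : {subset msupp p <= s} by move=> m h; rewrite mem_undup mem_cat h.
have sq : {subset msupp q <= s} by move=> m h; rewrite mem_undup mem_cat h orbT.
have spq : {subset msupp (p + q) <= s}.
  by move=> m /msuppD_le h; rewrite mem_undup.
rewrite (N1_sup us sp) (N1_sup us sq) (N1_sup us spq) -big_split /=.
by apply: leq_sum => m _; rewrite mcoeffD; lia.
Qed.

Lemma N1_opp p : N1 (- p) = N1 p.
Proof.
rewrite /N1 (perm_big _ (msuppN p)) /=.
by apply: eq_bigr => m _; rewrite mcoeffN abszN.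
Qed.

Lemma N1_sub p q : (N1 (p - q) <= N1 p + N1 q)%N.
Proof. by rewrite -(N1_opp q) N1_add. Qed.

Lemma N1_0 : N1 0 = 0%N.
Proof. by rewrite /N1 msupp0 big_nil. Qed.

Lemma N1_sum (I : Type) (r : seq I) (P : pred I) (F : I -> ZLXY) :
  (N1 (\sum_(i <- r | P i) F i) <= \sum_(i <- r | P i) N1 (F i))%N.
Proof.
elim: r => [|x r IH]; first by rewrite !big_nil N1_0.
rewrite !big_cons; case: (P x) => //.
by apply: leq_trans (N1_add _ _) _; rewrite leq_add2l.
Qed.

Lemma N1_ZX c m : (N1 (c *: 'X_[m]) <= `|c|)%N.
Proof.
have sub : {subset msupp (c *: ('X_[m] : ZLXY)) <= [:: m]}.
  by move=> k /msuppZ_le; rewrite msuppX.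
rewrite (N1_sup _ sub) // big_seq1 mcoeffZ mcoeffX eqxx mulr1 //.
Qed.

Lemma N1_mul p q : (N1 (p * q) <= N1 p * N1 q)%N.
Proof.
rewrite {1}(mpolyE p) {1}(mpolyE q) big_distrlr /=.
apply: leq_trans (N1_sum _ _ _) _.
rewrite /N1 big_distrl /=; apply: leq_sum => m _.
apply: leq_trans (N1_sum _ _ _) _.
rewrite big_distrr /=; apply: leq_sum => m' _.
rewrite -scalerAl -scalerAr scalerA -mpolyXD.
by apply: leq_trans (N1_ZX _ _) _; rewrite abszM.
Qed.

Lemma N1_1 : N1 1 = 1%N.
Proof. by rewrite /N1 msupp1 big_seq1 mcoeff1 eqxx. Qed.

Lemma N1_exp p k : (N1 (p ^+ k) <= N1 p ^ k)%N.
Proof.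
elim: k => [|k IH]; first by rewrite expr0 N1_1.
by rewrite exprS expnS; apply: leq_trans (N1_mul _ _) _; rewrite leq_mul2l IH orbT.
Qed.

Lemma N1_nat k : (N1 (k%:R) <= k)%N.
Proof.
elim: k => [|k IH]; first by rewrite N1_0.
by rewrite mulrSr; apply: leq_trans (N1_add _ _) _; rewrite N1_1 addn1.
Qed.

Lemma N1_Xi (i : 'I_3) : (N1 'X_i <= 1)%N.
Proof. by rewrite /N1 msuppX big_seq1 mcoeffX eqxx. Qed.

Lemma divz2_le (c : int) : (`|(c %/ 2)%Z| <= `|c|)%N.
Proof. lia. Qed.

Lemma N1_div2Y p : (N1 (div2Y p) <= N1 p)%N.
Proof.
rewrite /div2Y; apply: leq_trans (N1_sum _ _ _) _.
rewrite /N1 [X in (_ <= X)%N](bigID (fun m : 'X_{1..3} => (1 <= m iY)%N)) /=.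
apply: leq_trans (leq_addr _ _); apply: leq_sum => m _.
by apply: leq_trans (N1_ZX _ _) _; apply: divz2_le.
Qed.

Lemma size_psi_list n : size (psi_list n) = n.
Proof. by elim: n => //= n IH; rewrite size_rcons IH. Qed.

Lemma nth_psi_list n i : (i < n)%N -> nth 0 (psi_list n) i = psi i.
Proof.
elim: n => // n IH; rewrite ltnS leq_eqVlt => /orP[/eqP ->|lt] //.
by rewrite /= nth_rcons size_psi_list lt IH.
Qed.

Lemma psiE n : psi n = psi_next (psi_list n).
Proof. by rewrite /psi /= nth_rcons size_psi_list ltnn eqxx. Qed.

Lemma psi_odd k : (2 <= k)%N ->
  psi k.*2.+1 = psi k.+2 * psi k ^+ 3 - psi k.-1 * psi k.+1 ^+ 3.
Proof.
case: k => [|[|j]] // _; rewrite psiE /psi_next; set s := psi_list _.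
have -> : size s = (j.*2).+4.+1 by rewrite size_psi_list; lia.
rewrite [odd _]/= odd_double /= uphalf_double.
rewrite /s !nth_psi_list //; lia.
Qed.

Lemma psi_even k : (3 <= k)%N ->
  psi k.*2 = div2Y (psi k * (psi k.+2 * psi k.-1 ^+ 2 - psi k.-2 * psi k.+1 ^+ 2)).
Proof.
case: k => [|[|[|j]]] // _; rewrite psiE /psi_next; set s := psi_list _.
have -> : size s = (j.*2).+4.+2 by rewrite size_psi_list; lia.
rewrite [odd _]/= odd_double /= ?uphalf_double ?doubleK.
rewrite /s !nth_psi_list //; lia.
Qed.

Lemma expmono (x y e : nat) : (x <= y)%N -> (x ^ e <= y ^ e)%N.
Proof.
move=> h; elim: e => [|e IH] //; rewrite !expnS; exact: leq_mul.
Qed.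

Lemma mulbound p q a b e : (N1 p <= 3 ^ a)%N -> (N1 q <= 3 ^ b)%N ->
  (N1 (p * q ^+ e) <= 3 ^ (a + b * e))%N.
Proof.
move=> hp hq; apply: leq_trans (N1_mul _ _) _.
rewrite expnD expnM; apply: leq_mul => //.
apply: leq_trans (N1_exp _ _) _; exact: expmono.
Qed.

Lemma sum3 u v w : (u < w)%N -> (v < w)%N -> (3 ^ u + 3 ^ v <= 3 ^ w)%N.
Proof.
move=> hu hv; case: w hu hv => // w hu hv.
rewrite expnS.
have h1 : (3 ^ u <= 3 ^ w)%N by apply: leq_pexp2l.
have h2 : (3 ^ v <= 3 ^ w)%N by apply: leq_pexp2l.
lia.
Qed.

Ltac nb := lazymatch goal with
  | |- is_true (leq (N1 (@GRing.add _ ?a (@GRing.opp _ ?b))) _) => eapply leq_trans; [apply (N1_sub a b)|]; eapply leq_add; nb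
  | |- is_true (leq (N1 (@GRing.add _ ?a ?b)) _) => eapply leq_trans; [apply (N1_add a b)|]; eapply leq_add; nb
  | |- is_true (leq (N1 (@GRing.exp _ ?a ?k)) _) => eapply leq_trans; [apply (N1_exp a k)|]; eapply expmono; nb
  | |- is_true (leq (N1 (@GRing.natmul _ (@GRing.one _) ?k)) _) => apply (N1_nat k)
  | |- is_true (leq (N1 (@GRing.mul _ ?a ?b)) _) => eapply leq_trans; [apply (N1_mul a b)|]; eapply leq_mul; nb
  | |- is_true (leq (N1 (@GRing.one _)) _) => rewrite N1_1; apply leqnn
  | |- is_true (leq (N1 vL) _) => apply N1_Xi
  | |- is_true (leq (N1 vX) _) => apply N1_Xi
  | |- is_true (leq (N1 vY) _) => apply N1_Xi
  end.

Lemma psi_bound n : (N1 (psi n) <= 3 ^ ((n.-1) ^ 2))%N.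
Proof.
elim/ltn_ind: n => n IH.
case: n IH => [|[|[|[|[|n]]]]] IH.
- by rewrite psiE /= N1_0.
- by rewrite psiE /= N1_1.
- rewrite psiE /psi_next size_psi_list /=.
  eapply leq_trans; [nb | by []].
- rewrite psiE /psi_next size_psi_list /= /psi3.
  eapply leq_trans; [nb | by []].
- rewrite psiE /psi_next size_psi_list /= /psi4.
  eapply leq_trans; [nb | by []].
have [m em] : exists m, m = n.+4.+1 by eexists.
rewrite -em in IH *.
have hm : m = (odd m + (m./2).*2)%N by rewrite odd_double_half.
have [k ek] : exists k, k = m./2 by eexists.
rewrite -ek in hm.
have hk : (2 <= k)%N by rewrite ek em; lia.
move: hm hk; case: (odd m) => /= hm hk; rewrite hm.
- rewrite add1n psi_odd //.
  apply: leq_trans (N1_sub _ _) _.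
  apply: leq_trans (leq_add (mulbound 3 (IH k.+2 _) (IH k _))
                            (mulbound 3 (IH k.-1 _) (IH k.+1 _))) _;
    try (rewrite hm; lia).
  apply: sum3; rewrite /=; nia.
- have hk3 : (3 <= k)%N by lia.
  rewrite add0n psi_even //.
  apply: leq_trans (N1_div2Y _) _.
  apply: leq_trans (N1_mul _ _) _.
  have -> : ((k.*2).-1 ^ 2 = (k.-1) ^ 2 + ((k.*2).-1 ^ 2 - (k.-1) ^ 2))%N by nia.
  rewrite expnD; apply: leq_mul; first by apply: IH; lia.
  apply: leq_trans (N1_sub _ _) _.
  apply: leq_trans (leq_add (mulbound 2 (IH k.+2 _) (IH k.-1 _))
                            (mulbound 2 (IH k.-2 _) (IH k.+1 _))) _;
    try (rewrite hm; lia).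
  apply: sum3; rewrite /=; nia.
Qed.

Lemma maxcoef_le G : (maxcoef G <= N1 G)%N.
Proof.
rewrite /maxcoef /N1; elim: (msupp G) => [|x r IH]; first by rewrite !big_nil.
rewrite !big_cons geq_max leq_addr /=.
by apply: leq_trans IH _; rewrite leq_addl.
Qed.

Local Open Scope R_scope.

Lemma INR_exp3 e : INR (3 ^ e)%N = 3 ^ e.
Proof.
elim: e => [|e IH] //=; rewrite expnS -multE mult_INR IH /=.
ring. Qed.



Lemma aux : forall eps : R, 0 < eps ->
  exists c : R, forall n : nat, (1 <= n)%N ->
    height (psi n) <= c * Rpower (INR n) (2 + eps).
Proof.
intros eps heps. exists (ln 3). intros n hn.
have hb : (maxcoef (psi n) <= 3 ^ ((n.-1) ^ 2))%N.
  exact: leq_trans (maxcoef_le _) (psi_bound n).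
have h3 : 0 < ln 3.
  rewrite -ln_1; apply: ln_increasing; lra.
have hn0 : 1 <= INR n by apply: (le_INR 1); apply/leP.
have hpow : INR n ^ 2 <= Rpower (INR n) (2 + eps).
  rewrite Rpower_plus (_ : 2 = INR 2) ?Rpower_pow; try (simpl; lra).
  have : 1 <= Rpower (INR n) eps.
    rewrite /Rpower; apply: Rle_trans (exp_ineq1_le _).
    have : 0 <= ln (INR n).
      case: (Rle_lt_or_eq_dec _ _ hn0) => h.
      - rewrite -ln_1; left; apply: ln_increasing; lra.
      - by rewrite -h ln_1; lra.
    nra.
  have : 0 <= INR n ^ 2 by nra.
  nra.
have he : INR ((n.-1) ^ 2) <= INR n ^ 2.
  rewrite (_ : INR n ^ 2 = INR (n * n)%N); last by rewrite -multE mult_INR /=; ring.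
  apply: le_INR; apply/leP.
  rewrite (_ : (n.-1 ^ 2 = n.-1 * n.-1)%N) //; apply: leq_mul; exact: leq_pred.
rewrite /height.
move: hb; move: (maxcoef (psi n)) => M hb.
case: (posnP M) => hM.
- have hl : ln 0 = 0.
    unfold ln; case: (Rlt_dec 0 0) => h; [exfalso; exact: (Rlt_irrefl _ h)|reflexivity].
  rewrite hM /= hl.
  have : 0 < Rpower (INR n) (2 + eps) by rewrite /Rpower; apply: exp_pos.
  nra.
- have hM0 : 0 < INR M by apply: lt_0_INR; apply/ltP.
  have hMle : INR M <= 3 ^ ((n.-1) ^ 2).
    rewrite -INR_exp3; apply: le_INR; apply/leP; exact: hb.
  apply: Rle_trans (_ : ln (3 ^ ((n.-1) ^ 2)) <= _).
    case: (Rle_lt_or_eq_dec _ _ hMle) => h.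
    + left; exact: ln_increasing.
    + by rewrite h; right.
  rewrite ln_pow; last lra.
  have : 0 <= INR ((n.-1) ^ 2) by apply: pos_INR.
  nra.
Qed.

End Aux.

Open Scope R_scope.

Theorem lemmaA3 : forall eps : R, 0 < eps ->
  exists c : R, forall n : nat, (1 <= n)%nat ->
    height (psi n) <= c * Rpower (INR n) (2 + eps).
Proof.
intros eps heps. destruct (Aux.aux heps) as [c Hc]. exists c.
intros n hn. apply Hc. exact (ssrbool.introT ssrnat.leP hn).
Qed.
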